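(* Let $f\colon G\to G$ be a graph map with primitive transition matrix, and let $\widehat f\colon\widehat G\to\widehat G$ be its orientation lift to the oriented edge double. Then $\lambda_{\widehat f}=\lambda_f$, and $\widehat f$ has primitive transition matrix if and only if $f$ is not orientable.
   Context: A graph map sends vertices to vertices and edges to nondegenerate edge paths; its transition matrix has $(i,j)$ entry the number of times $f(e_j)$ crosses $e_i$ in either direction, and $\lambda_f$ denotes the spectral radius of this matrix. A nonnegative square matrix is primitive if some power has all entries positive. Fix an orientation of each edge of $G$. The oriented edge double is the graph $\widehat G$ with a map $p\colon\widehat G\to G$ bijective on vertices, with exactly two edges $e_+,e_-$ over each edge $e$ of $G$, where $p(e_+)=e$ and $p(e_-)=\overline e$ ($e$ reversed); orient $\widehat G$ by declaring each $e_\pm$ positive. Every edge path $\gamma$ in $G$ has a unique positive lift, i.e. an edge path in $\widehat G$ crossing edges only positively and projecting to $\gamma$. The orientation lift $\widehat f$ is the graph map sending $e_+$ to the positive lift of $f(e)$ and $e_-$ to the positive lift of $f(\overline e)$. A graph map is positively (resp. negatively) orientable if for some orientation of the graph every positive edge maps to an edge path crossing every edge positively (resp. negatively); it is orientable if it is positively or negatively orientable. *)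

(* Defs.v *)
From HB Require Import structures.
From mathcomp Require Import all_boot all_order all_algebra all_field.
Set Implicit Arguments. Unset Strict Implicit. Unset Printing Implicit Defensive.
Import Order.TTheory GRing.Theory Num.Theory.
Local Open Scope ring_scope.

(* An oriented edge (a crossing
   of an edge) is a pair (e, b) : E * bool, with b = true meaning e crossed
   positively (src -> tgt) and b = false meaning e crossed negatively, i.e.
   the reversed edge \overline e. *)

Section Graphs.
Variables (V E : finType) (src tgt : E -> V).

Definition oinit (a : E * bool) : V := if a.2 then src a.1 else tgt a.1.
Definition oterm (a : E * bool) : V := if a.2 then tgt a.1 else src a.1.

Definition edge_path_from_to (x y : V) (p : seq (E * bool)) : bool :=
  if p is a :: p' then
    [&& oinit a == x, path (fun b c => oterm b == oinit c) a p'
      & oterm (last a p') == y]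
  else false.

Definition is_graph_map (fv : V -> V) (fe : E -> seq (E * bool)) : Prop :=
  forall e, edge_path_from_to (fv (src e)) (fv (tgt e)) (fe e).

End Graphs.

Definition rev_path (E : Type) (p : seq (E * bool)) : seq (E * bool) :=
  rev (map (fun a => (a.1, ~~ a.2)) p).

Definition map_oedge (E : Type) (fe : E -> seq (E * bool)) (a : E * bool)
  : seq (E * bool) :=
  if a.2 then fe a.1 else rev_path (fe a.1).

(* Transition matrix: (i,j) entry = number of times f(e_j) crosses e_i in
   either direction.  Edges are indexed through enum_val. *)
Definition trans_mx (E : finType) (fe : E -> seq (E * bool)) : 'M[algC]_#|E| :=
  \matrix_(i, j) (count (fun a => a.1 == enum_val i) (fe (enum_val j)))%:R.

Definition eigenvalues n (A : 'M[algC]_n) : seq algC :=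
  sval (closed_field_poly_normal (char_poly A)).

Definition spectral_radius n (A : 'M[algC]_n) : algC :=
  \big[Num.max/0]_(z <- eigenvalues A) `|z|.

Definition primitive n (A : 'M[algC]_n) : Prop :=
  exists k : nat, (0 < k)%N /\ forall i j, 0 < (A ^+ k) i j.

(* Oriented edge double \hat G: same vertices, edges E * bool where
   (e,true) = e_+ lies over e and (e,false) = e_- lies over \overline e;
   every e_pm is oriented positively, so e_+ goes src e -> tgt e and
   e_- goes tgt e -> src e. *)
Definition dbl_src (V E : Type) (src tgt : E -> V) (a : E * bool) : V :=
  if a.2 then src a.1 else tgt a.1.
Definition dbl_tgt (V E : Type) (src tgt : E -> V) (a : E * bool) : V :=
  if a.2 then tgt a.1 else src a.1.

(* The projection p : \hat G -> G on edges: e_+ |-> e, e_- |-> \overline e,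
   i.e. the edge (e,b) of \hat G projects to the oriented edge (e,b) of G. *)
Definition dbl_proj (E : Type) (a : E * bool) : E * bool := a.

Definition pos_lift (E : Type) (p : seq (E * bool)) : seq ((E * bool) * bool) :=
  map (fun a => (a, true)) p.

Definition orient_lift_v (V : Type) (fv : V -> V) : V -> V := fv.
Definition orient_lift_e (E : Type) (fe : E -> seq (E * bool))
  (a : E * bool) : seq ((E * bool) * bool) :=
  pos_lift (map_oedge fe a).

(* Orientability.  An orientation of G is recorded relative to the fixed one
   by o : E -> bool (the positive direction of e is (e, o e)). *)
Definition positively_orientable (E : Type) (fe : E -> seq (E * bool)) : Prop :=
  exists o : E -> bool, forall e,
    all (fun a => a.2 == o a.1) (map_oedge fe (e, o e)).
Definition negatively_orientable (E : Type) (fe : E -> seq (E * bool)) : Prop :=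
  exists o : E -> bool, forall e,
    all (fun a => a.2 != o a.1) (map_oedge fe (e, o e)).
Definition orientable (E : Type) (fe : E -> seq (E * bool)) : Prop :=
  positively_orientable fe \/ negatively_orientable fe.

(* Main.v *)
Require Import Defs.
From HB Require Import structures.
From mathcomp Require Import all_boot all_order all_algebra all_field.
From mathcomp Require Import ring.
Import Order.TTheory GRing.Theory Num.Theory.
Local Open Scope ring_scope.
Set Implicit Arguments. Unset Strict Implicit. Unset Printing Implicit Defensive.

Definition srs (s : seq algC) : algC := \big[Num.max/0]_(z <- s) `|z|.

Lemma maxC_ge0 (x y : algC) : 0 <= x -> 0 <= y ->
  [/\ x <= Num.max x y, y <= Num.max x y & 0 <= Num.max x y].
Proof.
move=> hx hy; rewrite /Num.max /Order.max.
case: ifP => h; split=> //; first exact: ltW.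
by move: h; rewrite real_ltNge ?ger0_real // => /negbFE.
Qed.

Lemma srs_ge0 s : 0 <= srs s.
Proof.
elim: s => [|z s IH]; first by rewrite /srs big_nil.
by rewrite /srs big_cons; case: (maxC_ge0 (normr_ge0 z) IH).
Qed.

Lemma srs_ub s z : z \in s -> `|z| <= srs s.
Proof.
elim: s => [|y s IH] //; rewrite inE /srs big_cons => /orP [/eqP ->|/IH h].
  by case: (maxC_ge0 (normr_ge0 y) (srs_ge0 s)).
by case: (maxC_ge0 (normr_ge0 y) (srs_ge0 s)) => _ h2 _; apply: le_trans h h2.
Qed.

Lemma srs_le s X : 0 <= X -> (forall z, z \in s -> `|z| <= X) -> srs s <= X.
Proof.
move=> X0; elim: s => [|y s IH] H; first by rewrite /srs big_nil.
rewrite /srs big_cons /Num.max /Order.max; case: ifP => _.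
  by apply: IH => z zs; apply: H; rewrite inE zs orbT.
by apply: H; rewrite inE eqxx.
Qed.

Lemma sr_eig n (A : 'M[algC]_n) : spectral_radius A = srs (eigenvalues A).
Proof. by []. Qed.

Lemma char_poly_eig n (A : 'M[algC]_n) :
  char_poly A = \prod_(z <- eigenvalues A) ('X - z%:P).
Proof.
rewrite /eigenvalues; case: (closed_field_poly_normal _) => r /= ->.
by rewrite (monicP (char_poly_monic A)) scale1r.
Qed.

Lemma eig_mem n (A : 'M[algC]_n) z : (z \in eigenvalues A) = eigenvalue A z.
Proof. by rewrite eigenvalue_root_char char_poly_eig root_prod_XsubC. Qed.
Fixpoint app (L : seq algC) (x : nat -> algC) : nat -> algC :=
  if L is l :: L' then app L' (fun d => x d.+1 - l * x d) else x.

Lemma app_ext L x y : (forall d, x d = y d) -> forall d, app L x d = app L y d.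
Proof.
elim: L x y => [|l L IH] x y H d //=.
by apply: IH => d'; rewrite !H.
Qed.

Section Bound.
Variables r s : algC.
Hypotheses (r0 : 0 <= r) (rs : r < s).

Fixpoint Kb (L : seq algC) (x : nat -> algC) : algC :=
  if L is l :: L' then `|x 0%N| + Kb L' (fun d => x d.+1 - l * x d) / (s - r) else 0.

Lemma s0 : 0 < s. Proof. exact: le_lt_trans rs. Qed.
Lemma sr0 : 0 < s - r. Proof. by rewrite subr_gt0. Qed.

Lemma Kb_ge0 L x : 0 <= Kb L x.
Proof.
elim: L x => [|l L IH] x //=.
by rewrite addr_ge0 // divr_ge0 // ltW // sr0.
Qed.

Lemma app_bound L x : (forall l, l \in L -> `|l| <= r) ->
  (forall d, app L x d = 0) -> forall d, `|x d| <= Kb L x * s ^+ d.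
Proof.
elim: L x => [|l L IH] x HL H d /=.
  by have := H d; rewrite /= => ->; rewrite normr0 mul0r.
set y := fun d => _.
set C := Kb L y.
have Hy : forall d, `|y d| <= C * s ^+ d.
  by apply: IH => [l' l'L|]; [apply: HL; rewrite inE l'L orbT | exact: H].
have hl : `|l| <= r by apply: HL; rewrite inE eqxx.
set K := `|x 0%N| + C / (s - r).
have C0 : 0 <= C by exact: Kb_ge0.
have K0 : 0 <= K by rewrite addr_ge0 // divr_ge0 // ltW // sr0.
have KC : C <= K * (s - r).
  rewrite mulrDl divfK; last by rewrite lt0r_neq0 // sr0.
  by rewrite lerDr mulr_ge0 // ltW // sr0.
elim: d => [|d IHd].
  by rewrite expr0 mulr1 lerDl divr_ge0 // ltW // sr0.
have -> : x d.+1 = l * x d + y d by rewrite /y addrC subrK.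
apply: le_trans (ler_normD _ _) _.
rewrite normrM.
have h1 : `|l| * `|x d| <= r * (K * s ^+ d).
  by apply: ler_pM => //; apply: normr_ge0.
apply: le_trans (lerD h1 (Hy d)) _.
have -> : r * (K * s ^+ d) + C * s ^+ d = (r * K + C) * s ^+ d by ring.
rewrite exprS mulrA.
apply: ler_wpM2r; first by rewrite exprn_ge0 // ltW // s0.
have -> : K * s = r * K + K * (s - r) by ring.
by rewrite lerD2l.
Qed.

End Bound.

Lemma app_mat n (A : 'M[algC]_n.+1) L (u : 'rV_n.+1) (B : 'M_n.+1) j d :
  app L (fun d => (u *m (A ^+ d *m B)) 0 j) d =
  (u *m (A ^+ d *m (horner_mx A (\prod_(l <- L) ('X - l%:P)) *m B))) 0 j.
Proof.
elim: L B d => [|l L IH] B d /=.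
  by rewrite big_nil rmorph1 mul1mx.
rewrite (@app_ext L _ (fun d => (u *m (A ^+ d *m ((A - l%:M) *m B))) 0 j)); last first.
  move=> d'.
  have E : u *m (A ^+ d'.+1 *m B) - l *: (u *m (A ^+ d' *m B)) =
           u *m (A ^+ d' *m ((A - l%:M) *m B)).
    rewrite exprSr -mulmxE mulmxBl mul_scalar_mx mulmxBr mulmxBr.
    by rewrite !scalemxAr !mulmxA.
  by rewrite -E !mxE.
rewrite IH big_cons mulrC rmorphM rmorphB /= horner_mx_X horner_mx_C.
by rewrite -!mulmxE !mulmxA.
Qed.

Lemma bern (x : algC) d : 0 <= x -> 1 + d%:R * x <= (1 + x) ^+ d.
Proof.
move=> x0; elim: d => [|d IH]; first by rewrite mul0r addr0 expr0.
rewrite exprS; apply: le_trans (_ : (1 + x) * (1 + d%:R * x) <= _).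
  have -> : (1 + x) * (1 + d%:R * x) = 1 + d.+1%:R * x + d%:R * x * x.
    by rewrite -addn1 natrD; ring.
  by rewrite lerDl !mulr_ge0 // ler0n.
by apply: ler_wpM2l => //; rewrite addr_ge0.
Qed.

Lemma CW n (A : 'M[algC]_n) (u : 'rV_n) c :
  (forall i j, 0 <= A i j) -> (forall i, 0 <= u 0 i) -> (exists i, 0 < u 0 i) ->
  0 <= c -> (forall j, c * u 0 j <= (u *m A) 0 j) -> c <= spectral_radius A.
Proof.
case: n A u => [|n] A u HA Hu [j0 Hj0] c0 Hc; first by case: j0 Hj0.
rewrite sr_eig; set rho := srs _.
have rho0 : 0 <= rho by exact: srs_ge0.
rewrite real_leNgt ?ger0_real //; apply/negP => hlt.
set s := (rho + c) / 2.
have [h1 h2] := midf_lt hlt; rewrite -/s in h1 h2.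
have Hp : forall d j, c ^+ d * u 0 j <= (u *m A ^+ d) 0 j.
  elim=> [|d IH] j; first by rewrite expr0 mul1r mulmx1.
  rewrite [A ^+ _.+1]exprSr; change (A ^+ d * A) with (A ^+ d *m A).
  rewrite mulmxA mxE.
  apply: le_trans (_ : c ^+ d * (u *m A) 0 j <= _).
    by rewrite exprSr -mulrA ler_wpM2l // exprn_ge0.
  rewrite mxE mulr_sumr; apply: ler_sum => i _.
  by rewrite mulrA ler_wpM2r.
set x := fun d => (u *m (A ^+ d *m 1)) 0 j0.
have Happ : forall d, app (eigenvalues A) x d = 0.
  move=> d.
  rewrite /x app_mat -char_poly_eig Cayley_Hamilton.
  by rewrite mul0mx mulmx0 mulmx0 mxE.
have Hb := app_bound rho0 h1 (fun l lL => srs_ub lL) Happ.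
set K := Kb _ _ _ _ in Hb.
have s0 : 0 < s by exact: le_lt_trans h1.
set q := c / s.
have cq : c = s * q by rewrite /q mulrC divfK // lt0r_neq0.
have Hq : forall d, q ^+ d * u 0 j0 <= K.
  move=> d; have := Hb d; rewrite /x mulmx1.
  have := Hp d j0; rewrite cq exprMn -mulrA => H1 H2.
  have H3 := le_trans H1 (le_trans (real_ler_norm _) H2).
  rewrite -(ler_pM2l (exprn_gt0 d s0)) [X in _ <= X]mulrC.
  apply: H3; apply: ger0_real; apply: le_trans (_ : s ^+ d * (q ^+ d * u 0 j0) <= _) => //.
  have q0 : 0 <= q by rewrite divr_ge0 // ltW.
  apply: mulr_ge0; first exact: exprn_ge0 (ltW s0).
  by apply: mulr_ge0 => //; exact: exprn_ge0.
have q1 : 0 < q - 1.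
  by rewrite subr_gt0 /q ltr_pdivlMr // mul1r.
set d := Num.Def.archi_bound (K / ((q - 1) * u 0 j0)).
have Hd : K / ((q - 1) * u 0 j0) < d%:R.
  apply: archi_boundP; apply: divr_ge0; first exact: (Kb_ge0 h1).
  by apply: mulr_ge0; apply: ltW.
have := Hq d.
have : (1 + d%:R * (q - 1)) * u 0 j0 <= q ^+ d * u 0 j0.
  apply: ler_wpM2r; first exact: ltW.
  by have := bern d (ltW q1); rewrite [1 + (q - 1)]addrC subrK.
move=> H1 H2; have H3 := le_trans H1 H2.
move: Hd; rewrite ltr_pdivrMr ?mulr_gt0 // => Hd.
have : K < (1 + d%:R * (q - 1)) * u 0 j0.
  apply: lt_le_trans Hd _; rewrite mulrA ler_wpM2r ?ltW //.
  by rewrite -subr_gt0 addrK ltr01.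
by move=> H; move: (lt_le_trans H H3); rewrite ltxx.
Qed.
Section Gen.
Variable T : finType.

Fixpoint pwn (A : T -> T -> nat) (k : nat) (a b : T) : nat :=
  if k is k'.+1 then (\sum_c A a c * pwn A k' c b)%N else (a == b : nat).

Definition mat_of (A : T -> T -> nat) : 'M[algC]_#|T| :=
  \matrix_(i, j) (A (enum_val i) (enum_val j))%:R.

Lemma sum_ev (F : T -> algC) : \sum_(i < #|T|) F (enum_val i) = \sum_t F t.
Proof.
rewrite (reindex (@enum_rank T)) /=; last first.
  by exists enum_val => x _; [rewrite enum_rankK | rewrite enum_valK].
by apply: eq_bigr => t _; rewrite enum_rankK.
Qed.

Lemma mat_pow A k : (mat_of A) ^+ k = mat_of (pwn A k).
Proof.
elim: k => [|k IH].
  apply/matrixP => i j; rewrite !mxE /=.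
  by rewrite (inj_eq enum_val_inj); case: (i == j).
rewrite exprS IH -mulmxE; apply/matrixP => i j; rewrite !mxE /=.
rewrite natr_sum -(sum_ev (fun c => ((A (enum_val i) c * pwn A k c (enum_val j))%N)%:R)).
by apply: eq_bigr => l _; rewrite !mxE natrM.
Qed.

Lemma primitive_mat A :
  primitive (mat_of A) <-> exists k, (0 < k)%N /\ forall a b, (0 < pwn A k a b)%N.
Proof.
split=> [[k [k0 H]]|[k [k0 H]]]; exists k; split=> //.
  move=> a b; have := H (enum_rank a) (enum_rank b).
  by rewrite mat_pow mxE !enum_rankK ltr0n.
by move=> i j; rewrite mat_pow mxE ltr0n.
Qed.

Lemma pwn_add A j k a c :
  pwn A (j + k) a c = (\sum_b pwn A j a b * pwn A k b c)%N.
Proof.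
elim: j a => [|j IH] a /=.
  rewrite (bigD1 a) //= eqxx mul1n big1 ?addn0 // => b /negbTE.
  by rewrite eq_sym => ->.
under eq_bigr => d _ do rewrite IH big_distrr /=.
rewrite exchange_big /=; apply: eq_bigr => b _.
by rewrite big_distrl /=; apply: eq_bigr => d _; rewrite mulnA.
Qed.

Lemma pos_sum (I : finType) (F : I -> nat) i : (0 < F i)%N -> (0 < \sum_i F i)%N.
Proof. by move=> H; rewrite (bigD1 i) //= ltn_addr. Qed.

Lemma sum_pos (I : finType) (F : I -> nat) : (0 < \sum_i F i)%N -> exists i, (0 < F i)%N.
Proof.
move=> H; apply/existsP; apply: contraLR H; rewrite negb_exists => /forallP H.
by rewrite -leqNgt leqn0 big1 // => i _; apply/eqP; rewrite -leqn0 leqNgt H.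
Qed.

Lemma pwn_comp A j k a b c :
  (0 < pwn A j a b)%N -> (0 < pwn A k b c)%N -> (0 < pwn A (j + k) a c)%N.
Proof. by move=> H1 H2; rewrite pwn_add; apply: (pos_sum (i:=b)); rewrite muln_gt0 H1. Qed.

Lemma pwn_step A k a b : (0 < pwn A k.+1 a b)%N ->
  exists c, (0 < A a c)%N /\ (0 < pwn A k c b)%N.
Proof. by move=> /= /sum_pos [c]; rewrite muln_gt0 => /andP [] *; exists c. Qed.

End Gen.

Section Graph.
Variables (E : finType) (fe : E -> seq (E * bool)).

Definition flip (a : E * bool) : E * bool := (a.1, ~~ a.2).
Lemma flip_inj : injective flip.
Proof. by case=> x1 x2 [y1 y2] /= [-> /negb_inj ->]. Qed.

Definition Mc (e e' : E) : nat := count (fun a : E * bool => a.1 == e) (fe e').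
Definition Mhc (a b : E * bool) : nat := count (pred1 a) (map_oedge fe b).

Lemma trans_M : trans_mx fe = mat_of Mc.
Proof. by []. Qed.

Lemma trans_Mh : trans_mx (orient_lift_e fe) = mat_of Mhc.
Proof.
apply/matrixP => i j; rewrite !mxE /orient_lift_e /pos_lift count_map /Mhc.
by congr (_%:R); apply: eq_count => a.
Qed.

Lemma cnt_flip p a : count (pred1 a) (Defs.rev_path p) = count (pred1 (flip a)) p.
Proof.
rewrite /Defs.rev_path count_rev count_map; apply: eq_count => x /=.
by case: x a => x1 x2 [a1 a2]; rewrite /flip /= !xpair_eqE; case: x2; case: a2.
Qed.

Lemma cnt_split p e :
  (count (pred1 (e, true)) p + count (pred1 (e, false)) p =
   count (fun a : E * bool => a.1 == e) p)%N.
Proof.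
elim: p => [|[x1 x2] p IH] //=; rewrite -IH !xpair_eqE.
by case: x2; case: (x1 == e) => /=; rewrite ?add0n ?addnS ?addSn.
Qed.

Lemma FR e b : (Mhc (e, true) b + Mhc (e, false) b = Mc e b.1)%N.
Proof.
case: b => e' [] /=; rewrite /Mhc /Mc /map_oedge /=; first exact: cnt_split.
by rewrite !cnt_flip /flip /= addnC cnt_split.
Qed.

Lemma FC a e' : (Mhc a (e', true) + Mhc a (e', false) = Mc a.1 e')%N.
Proof.
case: a => e [] /=; rewrite /Mhc /Mc /map_oedge /= cnt_flip /flip /=;
  first exact: cnt_split.
by rewrite addnC cnt_split.
Qed.

Lemma Msym a b : Mhc (flip a) (flip b) = Mhc a b.
Proof.
case: b => e' [] /=; rewrite /Mhc /map_oedge /flip /=.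
  by rewrite cnt_flip /flip /= negbK; case: a.
by rewrite cnt_flip /flip.
Qed.

Lemma sum_pairN (F : E * bool -> nat) :
  (\sum_c F c = \sum_e (F (e, true) + F (e, false)))%N.
Proof.
rewrite [RHS](eq_bigr (fun e => \sum_t F (e, t))); last by move=> e _; rewrite big_bool.
by rewrite pair_bigA; apply: eq_bigr => -[].
Qed.

Lemma sum_pairC (F : E * bool -> algC) :
  \sum_c F c = \sum_e (F (e, true) + F (e, false)).
Proof.
rewrite [RHS](eq_bigr (fun e => \sum_t F (e, t))); last by move=> e _; rewrite big_bool.
by rewrite pair_bigA; apply: eq_bigr => -[].
Qed.

Lemma pw_sym k a b : pwn Mhc k (flip a) (flip b) = pwn Mhc k a b.
Proof.
elim: k a => [|k IH] a /=; first by rewrite (inj_eq flip_inj).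
rewrite (reindex_inj flip_inj); apply: eq_bigr => c _.
by rewrite Msym IH.
Qed.

Lemma pw_fiber k e b :
  (pwn Mhc k (e, true) b + pwn Mhc k (e, false) b = pwn Mc k e b.1)%N.
Proof.
elim: k e => [|k IH] e /=.
  by case: b => e' [] /=; rewrite !xpair_eqE /= ?andbT ?andbF ?addn0.
rewrite -big_split /= sum_pairN; apply: eq_bigr => e' _.
rewrite -!mulnDl.
by rewrite !FR /= -mulnDr IH.
Qed.


Lemma sr_ge : spectral_radius (mat_of Mc) <= spectral_radius (mat_of Mhc).
Proof.
rewrite [spectral_radius (mat_of Mc)]sr_eig; apply: srs_le; first exact: srs_ge0.
move=> l; rewrite eig_mem => /eigenvalueP [v Hv vn0].
rewrite sr_eig; apply: srs_ub; rewrite eig_mem; apply/eigenvalueP.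
exists (\row_i v 0 (enum_rank (enum_val i).1)).
  apply/rowP => j; rewrite !mxE.
  have Hv' := congr1 (fun M : 'rV[algC]__ => M 0 (enum_rank (enum_val j).1)) Hv.
  rewrite /= !mxE in Hv'; rewrite -Hv'.
  under eq_bigr => i _ do rewrite !mxE.
  rewrite (sum_ev (fun a => v 0 (enum_rank a.1) * (Mhc a (enum_val j))%:R)).
  rewrite sum_pairC.
  rewrite -(sum_ev (fun e => v 0 (enum_rank e) * (Mhc (e, true) (enum_val j))%:R +
                     v 0 (enum_rank e) * (Mhc (e, false) (enum_val j))%:R)).
  apply: eq_bigr => i _; rewrite !mxE enum_valK enum_rankK -mulrDr -natrD FR //.
apply: contraNneq vn0 => w0; apply/eqP/rowP => i.
have := congr1 (fun M : 'rV[algC]__ => M 0 (enum_rank (enum_val i, true))) w0.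
by rewrite !mxE enum_rankK /= enum_valK.
Qed.

Lemma sr_le : spectral_radius (mat_of Mhc) <= spectral_radius (mat_of Mc).
Proof.
rewrite [spectral_radius (mat_of Mhc)]sr_eig; apply: srs_le; first exact: srs_ge0.
move=> mu; rewrite eig_mem => /eigenvalueP [w Hw wn0].
set W := fun a => w 0 (enum_rank a).
apply: (CW (u := \row_i (`|W (enum_val i, true)| + `|W (enum_val i, false)|))).
- by move=> i j; rewrite mxE ler0n.
- by move=> i; rewrite mxE addr_ge0.
- case: (pickP (fun j => w 0 j != 0)) => [j wj | H]; last first.
    by case/eqP: wn0; apply/rowP => j; rewrite mxE; apply/eqP; rewrite -[_ == _]negbK H.
  exists (enum_rank (enum_val j).1); rewrite mxE enum_rankK.
  have hW : W (enum_val j) = w 0 j by rewrite /W enum_valK.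
  case: (enum_val j) hW => e [] /= hW.
    by rewrite ltr_wpDr // hW normr_gt0.
  by rewrite ltr_wpDl // hW normr_gt0.
- exact: normr_ge0.
move=> j; set e' := enum_val j.
have Hmu : forall b, mu * W b = \sum_a W a * (Mhc a b)%:R.
  move=> b; have := congr1 (fun M : 'rV[algC]__ => M 0 (enum_rank b)) Hw; rewrite /= !mxE => <-.
  rewrite -(sum_ev (fun a => W a * (Mhc a b)%:R)); apply: eq_bigr => i _.
  by rewrite !mxE /W enum_valK enum_rankK.
have Hb : forall b, `|mu| * `|W b| <= \sum_a `|W a| * (Mhc a b)%:R.
  move=> b; rewrite -normrM Hmu; apply: le_trans (ler_norm_sum _ _ _) _.
  by apply: ler_sum => a _; rewrite normrM normr_nat.
rewrite !mxE mulrDr; apply: le_trans (lerD (Hb (e', true)) (Hb (e', false))) _.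
rewrite -big_split /=.
rewrite [X in _ <= X](eq_bigr (fun i => (`|W (enum_val i, true)| + `|W (enum_val i, false)|)
    * (Mc (enum_val i) e')%:R)); last by move=> i _; rewrite !mxE.
rewrite (sum_ev (fun e => (`|W (e, true)| + `|W (e, false)|) * (Mc e e')%:R)).
rewrite [X in X <= _](eq_bigr (fun a => `|W a| * (Mc a.1 e')%:R)); last first.
  by move=> a _; rewrite -mulrDr -natrD FC.
by rewrite sum_pairC; apply: ler_sum => e _; rewrite mulrDl.
Qed.

Lemma pos_mem a b : (0 < Mhc a b)%N = (a \in map_oedge fe b).
Proof. by rewrite /Mhc -has_count has_pred1. Qed.

Lemma R1 a b : (0 < Mhc a b)%N -> (0 < pwn Mhc 1 a b)%N.
Proof. by move=> h; apply: (pos_sum (i:=b)); rewrite /= eqxx muln1. Qed.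

Lemma F3 k e e' t : (0 < pwn Mc k e e')%N ->
  exists s, (0 < pwn Mhc k (e, s) (e', t))%N.
Proof.
rewrite -(pw_fiber k e (e', t)) /=.
case: (posnP (pwn Mhc k (e, true) (e', t))) => [h|h]; last by exists true.
by rewrite h add0n => h2; exists false.
Qed.

Lemma F4 k e e' s : (0 < pwn Mc k e e')%N ->
  exists t, (0 < pwn Mhc k (e, s) (e', t))%N.
Proof.
move=> /(F3 true) [s' h]; case: (eqVneq s' s) => [<-|ne]; first by exists true.
exists false; have -> : s = ~~ s' by case: s s' ne {h} => [] [].
by have := pw_sym k (e, s') (e', true); rewrite /flip /= => ->.
Qed.

Lemma not_pos (o : E -> bool)
  (Ho : forall e, all (fun a => a.2 == o a.1) (map_oedge fe (e, o e))) k a b :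
  (0 < pwn Mhc k a b)%N -> b.2 = o b.1 -> a.2 = o a.1.
Proof.
elim: k a => [|k IH] a; first by rewrite /= lt0b => /eqP ->.
move/pwn_step => [c [h1 h2]] hb; have hc := IH c h2 hb.
move: h1; rewrite pos_mem; case: c hc {h2} => c1 c2 /= ->.
by move/(allP (Ho c1)) => /eqP.
Qed.

Lemma stepN (o : E -> bool)
  (Ho : forall e, all (fun a => a.2 != o a.1) (map_oedge fe (e, o e))) a c :
  (0 < Mhc a c)%N -> (a.2 == o a.1) = ~~ (c.2 == o c.1).
Proof.
case: c => c1 c2; case: (eqVneq c2 (o c1)) => [->|ne] h.
  move: h; rewrite pos_mem => /(allP (Ho c1)) /=.
  by move/negbTE.
rewrite -Msym in h; move: h; rewrite pos_mem /flip /=.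
have -> : ~~ c2 = o c1 by case: c2 (o c1) ne => [] [].
move/(allP (Ho c1)) => /=.
by case: (a.2); case: (o a.1).
Qed.

Lemma par (o : E -> bool)
  (Ho : forall e, all (fun a => a.2 != o a.1) (map_oedge fe (e, o e))) k a b :
  (0 < pwn Mhc k a b)%N -> (a.2 == o a.1) = (b.2 == o b.1) (+) odd k.
Proof.
elim: k a => [|k IH] a; first by rewrite /= lt0b => /eqP ->; rewrite addbF.
move/pwn_step => [c [h1 h2]].
by rewrite (stepN Ho h1) (IH c h2) /= addbN.
Qed.

Lemma prim_not_orient (e0 : E) :
  (exists k, (0 < k)%N /\ forall a b, (0 < pwn Mhc k a b)%N) -> ~ orientable fe.
Proof.
move=> [k [k0 Hk]] [[o Ho]|[o Ho]].
  have := not_pos Ho (Hk (e0, ~~ o e0) (e0, o e0)) erefl.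
  by rewrite /=; case: (o e0).
have h1 := par Ho (Hk (e0, o e0) (e0, o e0)).
have h2 := par Ho (Hk (e0, o e0) (e0, ~~ o e0)).
move: h1 h2; rewrite /= eqxx.
have -> : (~~ o e0 == o e0) = false by case: (o e0).
by case: (odd k).
Qed.

Lemma orient_or_prim m (m0 : (0 < m)%N)
  (Hm : forall e e', (0 < pwn Mc m e e')%N) (e0 : E) :
  (exists k, (0 < k)%N /\ forall a b, (0 < pwn Mhc k a b)%N) \/ orientable fe.
Proof.
set D := fun k => (0 < pwn Mhc k (e0, true) (e0, true))%N &&
                  (0 < pwn Mhc k (e0, false) (e0, true))%N.
have Dprim : forall k, D k ->
    exists K, (0 < K)%N /\ forall a b, (0 < pwn Mhc K a b)%N.
  move=> k /andP [d1 d2]; exists (m + k + m); split; first by rewrite addn_gt0 m0 orbT.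
  move=> [a1 a2] [b1 b2].
  have [t1 h1] := F4 a2 (Hm a1 e0).
  have [t2 h2] := F3 b2 (Hm e0 b1).
  have h3 : (0 < pwn Mhc k (e0, t1) (e0, t2))%N.
    case: t2 {h2}; first by case: t1 {h1}.
    have := pw_sym k (e0, ~~ t1) (e0, true); rewrite /flip /= negbK => ->.
    by case: t1 {h1}.
  exact: pwn_comp (pwn_comp h1 h3) h2.
case: (boolP (D (m + m))) => [/Dprim H|nD1]; first by left.
case: (boolP (D (m + (1 + m)))) => [/Dprim H|nD2]; first by left.
have U : forall k, ~~ D k -> forall x y, (0 < pwn Mhc k (e0, x) (e0, true))%N ->
    (0 < pwn Mhc k (e0, y) (e0, true))%N -> x = y.
  move=> k nD [] [] // hx hy; move: nD; rewrite /D ?hx ?hy //.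
pose o e := if [pick s | (0 < pwn Mhc m (e, s) (e0, true))%N] is Some s then s else true.
have Ho : forall e, (0 < pwn Mhc m (e, o e) (e0, true))%N.
  move=> e; rewrite /o; case: pickP => [s //|H].
  by have [s hs] := F3 true (Hm e e0); have := H s; rewrite hs.
have Key : forall e a, a \in map_oedge fe (e, o e) -> exists y,
    (0 < pwn Mhc (m + m) (e0, y) (e0, true))%N /\
    (0 < pwn Mhc (m + (1 + m)) (e0, y (+) (a.2 != o a.1)) (e0, true))%N.
  move=> e [e1 s1] ha.
  have hR1 := R1 (etrans (pos_mem _ _) ha).
  have h1m := pwn_comp hR1 (Ho e).
  have [y hy] := F3 (o e1) (Hm e0 e1).
  exists y; split; first exact: pwn_comp hy (Ho e1).
  case: (eqVneq s1 (o e1)) => [E1|ne] /=.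
    by rewrite addbF; rewrite E1 in h1m; exact: pwn_comp hy h1m.
  rewrite addbT.
  have hy' : (0 < pwn Mhc m (e0, ~~ y) (e1, s1))%N.
    rewrite -(pw_sym m (e0, ~~ y)) /flip /= negbK.
    by have -> : ~~ s1 = o e1 by case: s1 (o e1) ne {ha hR1 h1m} => [] [].
  exact: pwn_comp hy' h1m.
right.
case: (boolP [forall e, all (fun a => a.2 == o a.1) (map_oedge fe (e, o e))]).
  by move/forallP => H; left; exists o.
rewrite negb_forall => /existsP [e /allPn [a ha hna]].
right; exists o => e'; apply/allP => a' ha'.
have [y [hy1 hy2]] := Key e a ha.
have [y' [hy1' hy2']] := Key e' a' ha'.
have yy := U _ nD1 _ _ hy1 hy1'; subst y'.
have := U _ nD2 _ _ hy2 hy2'; rewrite hna.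
by move=> /(congr1 (addb y)); rewrite !addKb => <-.
Qed.

End Graph.

Theorem lemma2p4 (V E : finType) (src tgt : E -> V)
  (fv : V -> V) (fe : E -> seq (E * bool)) :
  (0 < #|E|)%N ->
  is_graph_map src tgt fv fe ->
  primitive (trans_mx fe) ->
  spectral_radius (trans_mx (orient_lift_e fe)) = spectral_radius (trans_mx fe) /\
  (primitive (trans_mx (orient_lift_e fe)) <-> ~ orientable fe).
Proof.
move=> cardE _ Hprim; have [e0 _] := card_gt0P cardE.
rewrite trans_Mh trans_M in Hprim *.
split; first by apply/le_anti; rewrite sr_le sr_ge.
split; first by move/primitive_mat; exact: prim_not_orient e0.
move=> nO; move/primitive_mat: Hprim => [m [m0 Hm]].
by case: (orient_or_prim m0 Hm e0) => H; [apply/primitive_mat | contradiction].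
Qed.
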